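(* In a signed group the following hold. (1) If $n\in\{2,3\}$ and $E$ is a basic set of size $n$ containing at least one pair of anticommuting elements, then $E$ can be replaced by an anticommutative generator. (2) If $\mathbf u=(u_1,u_2,\dots)$ is a basic sequence with $u_k\circ u_{k+1}=-1$ for all $k$ and $u_i\circ u_j=1$ whenever $|i-j|\ge2$, then $e_k=u_1\cdots u_k$ defines an anticommutative generator $(e_k)$ which is a replacement of $\mathbf u$; conversely $u_k=e_{k-1}e_k$ up to sign, with $e_0=1$. (3) An anticommutative generator of even or countably infinite size and a chain of commuting anticommutative doubletons, i.e. a union of sets $D_k=\{d_{2k-1},d_{2k}\}$ with $d_{2k-1}\circ d_{2k}=-1$ and $D_i\circ D_j=1$ for $i\neq j$, are mutually replaceable: every generator of either kind has a replacement of the other kind. (4) In particular, a finite anticommutative generator $E$ of even size, or an infinite one, can be replaced by a generator $E'$ admitting a partition $E'=F_1\cup F_2\cup\cdots$ into mutually commuting anticommutative components of finite even or infinite size; for infinite $E$ the number of components can be either finite or infinite. (5) Let $E=K\cup M$ be a generator where $K\circ M=1$, $K$ is finite and anticommutative and $M$ is commutative. If $|K|$ is even and $M\neq\emptyset$, then $E$ has a replacement $K'\cup M'$ of the same kind with $|K'|=|K|+1$ and $|M'|=|M|-1$; if $|K|$ is odd, then it has a replacement $K'\cup M'$ of the same kind with $|K'|=|K|-1$ and $|M'|=|M|+1$.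
   Context: A signed group is a group containing a central element $-1\neq1$ with $(-1)^2=1$ such that any two elements either commute or anticommute ($ef=-fe$), and each element $e$ has $e^2\in\{\pm1\}$. Write $e\circ f=1$ if $ef=fe$ and $-1$ if $ef=-fe$; for sets, $A\circ B=1$ means every element of $A$ commutes with every element of $B$. For a sequence $\mathbf e$ and finitary $0$-$1$ sequence $\mathbf p$, $\mathbf e^{\mathbf p}=e_1^{p_1}e_2^{p_2}\cdots$. A set/sequence is basic if no product $\mathbf e^{\mathbf p}$ with $\mathbf p\neq\mathbf 0$ equals $\pm1$; a generator is a basic set/sequence, generating the group $\{\pm\mathbf e^{\mathbf p}\}$; a replacement of a generator is another generator generating the same group (generators differing only by signs and permutations are identified). A set is anticommutative if its distinct elements pairwise anticommute, commutative if they pairwise commute. *)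

(* Defs.v *)
From Stdlib Require Import List Arith Sorting.Sorted.
Import ListNotations.
Set Implicit Arguments.
Unset Strict Implicit.

Record SignedGroup := {
  sg_car :> Type;
  sg_mul : sg_car -> sg_car -> sg_car;
  sg_one : sg_car;
  sg_inv : sg_car -> sg_car;
  sg_neg1 : sg_car;
  sg_mulA : forall x y z, sg_mul x (sg_mul y z) = sg_mul (sg_mul x y) z;
  sg_mul1 : forall x, sg_mul sg_one x = x;
  sg_mul1r : forall x, sg_mul x sg_one = x;
  sg_mulV : forall x, sg_mul (sg_inv x) x = sg_one;
  sg_mulVr : forall x, sg_mul x (sg_inv x) = sg_one;
  sg_neg1_neq1 : sg_neg1 <> sg_one;
  sg_neg1_sq : sg_mul sg_neg1 sg_neg1 = sg_one;
  sg_neg1_central : forall x, sg_mul sg_neg1 x = sg_mul x sg_neg1;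
  sg_comm_or_anti : forall x y,
      sg_mul x y = sg_mul y x \/ sg_mul x y = sg_mul sg_neg1 (sg_mul y x);
  sg_sq : forall x, sg_mul x x = sg_one \/ sg_mul x x = sg_neg1
}.

Arguments sg_mul {s}.
Arguments sg_one {s}.
Arguments sg_inv {s}.
Arguments sg_neg1 {s}.

Section Defs.
Variable G : SignedGroup.

Definition gset := G -> Prop.

Definition commutes (x y : G) : Prop := sg_mul x y = sg_mul y x.
Definition anticommutes (x y : G) : Prop :=
  sg_mul x y = sg_mul sg_neg1 (sg_mul y x).

Definition lprod (s : list G) : G := fold_right sg_mul sg_one s.

Definition set_commute (A B : gset) : Prop :=
  forall x y, A x -> B y -> commutes x y.

Definition anticommutative (E : gset) : Prop :=
  forall x y, E x -> E y -> x <> y -> anticommutes x y.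
Definition commutative (E : gset) : Prop :=
  forall x y, E x -> E y -> commutes x y.

Definition basic (E : gset) : Prop :=
  forall s : list G, NoDup s -> s <> [] -> (forall y, In y s -> E y) ->
    lprod s <> sg_one /\ lprod s <> sg_neg1.

Definition generator (E : gset) : Prop := basic E.

Definition gen_group (E : gset) : gset :=
  fun x => exists s : list G, NoDup s /\ (forall y, In y s -> E y) /\
    (x = lprod s \/ x = sg_mul sg_neg1 (lprod s)).

Definition replacement (E E' : gset) : Prop :=
  generator E' /\ forall x, gen_group E x <-> gen_group E' x.

Definition has_card (E : gset) (n : nat) : Prop :=
  exists s : list G, NoDup s /\ length s = n /\ forall x, E x <-> In x s.
Definition countably_infinite (E : gset) : Prop :=
  exists f : nat -> G, (forall i j, f i = f j -> i = j) /\
    forall x, E x <-> exists k, f k = x.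
Definition equinumerous (A B : gset) : Prop :=
  exists f : G -> G, (forall x, A x -> B (f x)) /\
    (forall x y, A x -> A y -> f x = f y -> x = y) /\
    (forall y, B y -> exists x, A x /\ f x = y).

Definition idx (N : option nat) (k : nat) : Prop :=
  1 <= k /\ match N with Some n => k <= n | None => True end.

Definition seq_set (N : option nat) (u : nat -> G) : gset :=
  fun x => exists k, idx N k /\ u k = x.

(* basic sequence: u^p <> +-1 for every finitary 0-1 sequence p <> 0,
   p encoded as its (strictly increasing) support *)
Definition basic_seq (N : option nat) (u : nat -> G) : Prop :=
  forall s : list nat, s <> [] -> Sorted lt s -> (forall k, In k s -> idx N k) ->
    lprod (map u s) <> sg_one /\ lprod (map u s) <> sg_neg1.

Definition doubleton_chain (E : gset) : Prop :=
  exists (N : option nat) (a b : nat -> G),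
    (forall x, E x <-> exists k, idx N k /\ (x = a k \/ x = b k)) /\
    (forall k, idx N k -> anticommutes (a k) (b k)) /\
    (forall i j, idx N i -> idx N j -> i <> j ->
       set_commute (fun x => x = a i \/ x = b i) (fun y => y = a j \/ y = b j)).

Definition ac_component_partition (E : gset) (J : option nat)
    (F : nat -> gset) : Prop :=
  (forall x, E x <-> exists i, idx J i /\ F i x) /\
  (forall i j x, idx J i -> idx J j -> F i x -> F j x -> i = j) /\
  (forall i, idx J i -> exists x, F i x) /\
  (forall i, idx J i -> anticommutative (F i)) /\
  (forall i, idx J i -> (exists n, has_card (F i) (2 * n)) \/ countably_infinite (F i)) /\
  (forall i j, idx J i -> idx J j -> i <> j -> set_commute (F i) (F j)).

End Defs.

(* Main.v *)
Require Import Defs.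
From Stdlib Require Import List Arith Lia Bool Sorting.Sorted Permutation Classical Lia ClassicalEpsilon.
Import ListNotations.
Set Implicit Arguments.

Section SG.
Variable G : SignedGroup.
Local Notation mul := (@sg_mul G).
Local Notation n1 := (@sg_neg1 G).
Local Notation one := (@sg_one G).

Lemma mulA x y z : mul x (mul y z) = mul (mul x y) z.
Proof. apply sg_mulA. Qed.

Definition sgn (b : bool) : G := if b then n1 else one.

Lemma cancel_r a b g : mul a g = mul b g -> a = b.
Proof.
  intro H. assert (H2 : mul (mul a g) (sg_inv g) = mul (mul b g) (sg_inv g)) by (rewrite H; auto).
  rewrite <- !mulA, sg_mulVr, !sg_mul1r in H2. exact H2.
Qed.

Lemma cancel_l a b g : mul g a = mul g b -> a = b.
Proof.
  intro H. assert (H2 : mul (sg_inv g) (mul g a) = mul (sg_inv g) (mul g b)) by (rewrite H; auto).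
  rewrite !mulA, sg_mulV, !sg_mul1 in H2. exact H2.
Qed.

Lemma sgn_inj b c : sgn b = sgn c -> b = c.
Proof.
  destruct b, c; simpl; auto; intro H.
  - exfalso; eapply sg_neg1_neq1; eauto.
  - exfalso; eapply sg_neg1_neq1; eauto.
Qed.

Lemma sgn_mul b c x : mul (sgn b) (mul (sgn c) x) = mul (sgn (xorb b c)) x.
Proof.
  destruct b, c; simpl; rewrite ?sg_mul1; auto.
  rewrite mulA, sg_neg1_sq, sg_mul1; auto.
Qed.

Lemma sgn_sgn b c : mul (sgn b) (sgn c) = sgn (xorb b c).
Proof.
  destruct b, c; simpl; rewrite ?sg_mul1, ?sg_mul1r; auto. apply sg_neg1_sq.
Qed.

Lemma sgn_central b x : mul (sgn b) x = mul x (sgn b).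
Proof. destruct b; simpl. apply sg_neg1_central. rewrite sg_mul1, sg_mul1r; auto. Qed.

Lemma sgn_in a b x : mul a (mul (sgn b) x) = mul (sgn b) (mul a x).
Proof. rewrite !mulA, sgn_central; auto. Qed.

Lemma sgn_out b x y : mul (mul (sgn b) x) y = mul (sgn b) (mul x y).
Proof. rewrite mulA; auto. Qed.

Lemma sgn_false x : mul (sgn false) x = x.
Proof. apply sg_mul1. Qed.

Lemma sgn_cancel b x y : mul (sgn b) x = mul (sgn b) y -> x = y.
Proof. apply cancel_l. Qed.

Lemma sgn_uniq b c x : mul (sgn b) x = mul (sgn c) x -> b = c.
Proof. intro H; apply sgn_inj; eapply cancel_r; eauto. Qed.

Lemma sq_sgn x : exists b, mul x x = sgn b.
Proof. destruct (sg_sq x) as [H|H]; [exists false|exists true]; auto. Qed.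

Definition ac (a b : G) : bool :=
  if excluded_middle_informative (anticommutes a b) then true else false.

Lemma ac_spec a b : mul a b = mul (sgn (ac a b)) (mul b a).
Proof.
  unfold ac; destruct excluded_middle_informative as [H|H]; simpl; auto.
  rewrite sg_mul1. destruct (sg_comm_or_anti a b); auto; contradiction.
Qed.

Lemma ac_char a b c : mul a b = mul (sgn c) (mul b a) -> ac a b = c.
Proof. intro H. rewrite ac_spec in H. eapply sgn_uniq; eauto. Qed.

Lemma ac_anti a b : ac a b = true <-> anticommutes a b.
Proof.
  split; intro H.
  - unfold anticommutes. rewrite ac_spec, H. auto.
  - apply ac_char. exact H.
Qed.

Lemma ac_comm a b : ac a b = false <-> commutes a b.
Proof.
  split; intro H.
  - unfold commutes. rewrite ac_spec, H. apply sg_mul1.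
  - apply ac_char. simpl. rewrite sg_mul1. exact H.
Qed.

Lemma ac_sym a b : ac b a = ac a b.
Proof.
  apply ac_char. rewrite (ac_spec a b). rewrite sgn_mul, xorb_nilpotent, sgn_false. auto.
Qed.

Lemma ac_refl a : ac a a = false.
Proof. apply ac_char. rewrite sgn_false; auto. Qed.

Lemma ac_mull a b c : ac (mul a b) c = xorb (ac a c) (ac b c).
Proof.
  apply ac_char.
  rewrite <- mulA, (ac_spec b c), sgn_in, (mulA a c b), (ac_spec a c), sgn_out, sgn_mul, <- mulA.
  f_equal. destruct (ac a c), (ac b c); auto.
Qed.

Lemma ac_mulr a b c : ac c (mul a b) = xorb (ac c a) (ac c b).
Proof. rewrite ac_sym, ac_mull, (ac_sym a), (ac_sym b); auto. Qed.

Lemma ac_sgn b a : ac (sgn b) a = false.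
Proof. apply ac_comm. unfold commutes. apply sgn_central. Qed.

Lemma ac_sgnr b a : ac a (sgn b) = false.
Proof. rewrite ac_sym; apply ac_sgn. Qed.

Lemma ac_one a : ac one a = false.
Proof. apply (ac_sgn false). Qed.

Lemma lprod_app l1 l2 : lprod (l1 ++ l2) = mul (lprod l1) (lprod l2).
Proof.
  induction l1; simpl. rewrite sg_mul1; auto. unfold lprod in *. simpl. rewrite IHl1, mulA; auto.
Qed.

Lemma lprod_cons a l : lprod (a :: l) = mul a (lprod l).
Proof. reflexivity. Qed.

Lemma ac_lprod_false l c : (forall a, In a l -> ac a c = false) -> ac (lprod l) c = false.
Proof.
  induction l; intro H. apply ac_one.
  rewrite lprod_cons, ac_mull, H, IHl; simpl; auto; intros; apply H; simpl; auto.
Qed.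


Lemma lprod_nil : lprod (G:=G) [] = one.
Proof. reflexivity. Qed.

Lemma gg_iff (A : gset G) g : gen_group A g <->
  exists s b, NoDup s /\ (forall y, In y s -> A y) /\ g = mul (sgn b) (lprod s).
Proof.
  split.
  - intros (s & H1 & H2 & [H3|H3]); exists s.
    + exists false; rewrite sgn_false; auto.
    + exists true; auto.
  - intros (s & b & H1 & H2 & H3); exists s; repeat split; auto.
    destruct b; simpl in H3; auto. rewrite sg_mul1 in H3; auto.
Qed.

Lemma gg_sgn_mul (A : gset G) b g : gen_group A g -> gen_group A (mul (sgn b) g).
Proof.
  rewrite !gg_iff. intros (s & c & H1 & H2 & H3). exists s, (xorb b c).
  repeat split; auto. subst. apply sgn_mul.
Qed.

Lemma gg_sgn (A : gset G) b : gen_group A (sgn b).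
Proof.
  apply gg_iff. exists [], b. repeat split; auto. constructor. intros y [].
  simpl. unfold lprod; simpl. rewrite sg_mul1r; auto.
Qed.

Lemma gg_one (A : gset G) : gen_group A one.
Proof. apply (gg_sgn A false). Qed.

Lemma gg_incl (A : gset G) g : A g -> gen_group A g.
Proof.
  intro H. apply gg_iff. exists [g], false. repeat split.
  repeat constructor; auto. intros y [->|[]]; auto.
  rewrite sgn_false. unfold lprod; simpl. rewrite sg_mul1r; auto.
Qed.

Lemma extract (x : G) u : NoDup u -> In x u -> exists r b, NoDup r /\
  (forall y, In y r -> In y u) /\ lprod u = mul (sgn b) (mul x (lprod r)).
Proof.
  induction u as [|y u IH]; intros Hn Hi. destruct Hi.
  inversion Hn; subst.
  destruct (classic (y = x)) as [<-|Hne].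
  - exists u, false. repeat split; auto. intros; right; auto. rewrite sgn_false; auto.
  - destruct Hi as [Hi|Hi]; [congruence|].
    destruct (IH H2 Hi) as (r & b & Hr1 & Hr2 & Hr3).
    exists (y :: r), (xorb b (ac y x)). repeat split.
    + constructor; auto.
    + intros z [<-|Hz]; simpl; auto.
    + rewrite lprod_cons, Hr3, sgn_in, (mulA y x), (ac_spec y x), sgn_out, sgn_mul, <- mulA. auto.
Qed.

Lemma gg_mul_elem (A : gset G) x g : A x -> gen_group A g -> gen_group A (mul x g).
Proof.
  intros Hx. rewrite !gg_iff. intros (s & b & H1 & H2 & ->).
  rewrite sgn_in.
  destruct (classic (In x s)) as [Hi|Hi].
  - destruct (@extract x s H1 Hi) as (r & c & Hr1 & Hr2 & ->).
    destruct (sq_sgn x) as [d Hd].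
    exists r, (xorb b (xorb c d)). repeat split; auto.
    rewrite (sgn_in x c), (mulA x x), Hd, !sgn_mul. f_equal. f_equal. destruct b, c, d; auto.
  - exists (x :: s), b. repeat split; auto. constructor; auto.
    intros y [<-|Hy]; auto.
Qed.

Lemma gg_mul (A : gset G) g h : gen_group A g -> gen_group A h -> gen_group A (mul g h).
Proof.
  intros Hg Hh. apply gg_iff in Hg. destruct Hg as (s & b & H1 & H2 & ->).
  rewrite sgn_out. apply gg_sgn_mul. clear H1.
  induction s as [|a s IH]. rewrite lprod_nil, sg_mul1; auto.
  rewrite lprod_cons, <- mulA. apply gg_mul_elem. apply H2; simpl; auto.
  apply IH. intros; apply H2; simpl; auto.
Qed.

Lemma gg_lprod (A : gset G) l : (forall y, In y l -> gen_group A y) -> gen_group A (lprod l).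
Proof.
  induction l; intro H. apply gg_one. rewrite lprod_cons. apply gg_mul.
  apply H; simpl; auto. apply IHl; intros; apply H; simpl; auto.
Qed.

Lemma gg_min (A B : gset G) g : (forall y, A y -> gen_group B y) -> gen_group A g -> gen_group B g.
Proof.
  intros H Hg. apply gg_iff in Hg. destruct Hg as (s & b & H1 & H2 & ->).
  apply gg_sgn_mul, gg_lprod. intros; apply H, H2; auto.
Qed.

Lemma gg_mono (A B : gset G) g : (forall y, A y -> B y) -> gen_group A g -> gen_group B g.
Proof. intro H; apply gg_min; intros; apply gg_incl; auto. Qed.

Lemma gg_ext (A B : gset G) g : (forall y, A y <-> B y) -> (gen_group A g <-> gen_group B g).
Proof. intro H; split; apply gg_mono; firstorder. Qed.

Lemma mul_sq_r g h : exists b, mul (mul g h) h = mul (sgn b) g.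
Proof.
  destruct (sq_sgn h) as [b Hb]. exists b. rewrite <- mulA, Hb, <- sgn_central; auto.
Qed.

Lemma gg_div (A : gset G) g h : gen_group A (mul g h) -> gen_group A h -> gen_group A g.
Proof.
  intros H1 H2. destruct (mul_sq_r g h) as [b Hb].
  assert (H3 := gg_mul H1 H2). rewrite Hb in H3.
  apply (gg_sgn_mul b) in H3. rewrite sgn_mul, xorb_nilpotent, sgn_false in H3; auto.
Qed.

Lemma gg_divl (A : gset G) g h : gen_group A (mul h g) -> gen_group A h -> gen_group A g.
Proof.
  intros H1 H2. apply gg_div with (h := h); auto. rewrite ac_spec. apply gg_sgn_mul; auto.
Qed.

Lemma basic_ext (A B : gset G) : (forall y, A y <-> B y) -> basic A -> basic B.
Proof. intros H HA s H1 H2 H3. apply HA; auto. intros; apply H; auto. Qed.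

Lemma basic_sgn (E : gset G) s b : basic E -> NoDup s -> s <> [] -> (forall y, In y s -> E y) ->
  lprod s <> sgn b.
Proof. intros HE H1 H2 H3. destruct (HE s H1 H2 H3). destruct b; auto. Qed.

Lemma core (E A : gset G) x : basic E -> E x -> (forall y, A y -> E y /\ y <> x) ->
  ~ gen_group A x.
Proof.
  intros HE Hx HA Hg. apply gg_iff in Hg. destruct Hg as (s & b & H1 & H2 & H3).
  assert (Hxs : ~ In x s) by (intro Hi; apply (HA x); auto).
  assert (H4 : lprod s = mul (sgn b) x).
  { rewrite H3, sgn_mul, xorb_nilpotent, sgn_false; auto. }
  destruct (sq_sgn x) as [c Hc].
  apply (basic_sgn (s := x :: s) (xorb b c) HE).
  - constructor; auto.
  - discriminate.
  - intros y [<-|Hy]; auto. apply HA; auto.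
  - rewrite lprod_cons, H4, sgn_in, Hc, sgn_sgn; auto.
Qed.

Lemma lprod_perm (l l' : list G) : Permutation l l' -> exists b, lprod l' = mul (sgn b) (lprod l).
Proof.
  induction 1.
  - exists false; rewrite sgn_false; auto.
  - destruct IHPermutation as [b Hb]. exists b. rewrite !lprod_cons, Hb, sgn_in; auto.
  - exists (ac y x). rewrite !lprod_cons, (mulA y x), (mulA x y), (ac_spec y x), sgn_out, sgn_mul, xorb_nilpotent, sgn_false; auto.
  - destruct IHPermutation1 as [b Hb], IHPermutation2 as [c Hc]. exists (xorb c b).
    rewrite Hc, Hb, sgn_mul; auto.
Qed.


Section TRI.

Variable D : nat -> Prop.
Variables x y : nat -> G.
Variable B : gset G.

Definition TX : gset G := fun g => (exists i, D i /\ x i = g) \/ B g.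
Definition TY : gset G := fun g => (exists i, D i /\ y i = g) \/ B g.
Definition TS (i : nat) : gset G := fun g => (exists j, D j /\ j < i /\ x j = g) \/ B g.

Hypothesis HX : basic TX.
Hypothesis Hinj : forall i j, D i -> D j -> x i = x j -> i = j.
Hypothesis Hdisj : forall i, D i -> ~ B (x i).
Hypothesis Htri : forall i, D i -> exists w, gen_group (TS i) w /\ y i = mul (x i) w.

Lemma T_notin i : D i -> ~ gen_group (TS i) (x i).
Proof.
  intro Hi. apply (core (E := TX)); auto.
  - left; eauto.
  - intros g [(j & Hj & Hji & <-)|Hg]; split.
    + left; eauto.
    + intro He. apply Hinj in He; auto. lia.
    + right; auto.
    + intros ->. apply (Hdisj Hi); auto.
Qed.

Lemma T_T i z : D i -> gen_group (TS i) z -> ~ gen_group (TS i) (mul (x i) z).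
Proof. intros Hi Hz H. apply (T_notin Hi). eapply gg_div; eauto. Qed.

Lemma TS_mono i j : j <= i -> forall g, TS j g -> TS i g.
Proof. intros Hji g [(k & Hk & Hkj & <-)|Hg]; [left; exists k; repeat split; auto; lia|right; auto]. Qed.

Lemma T_yS i j : D j -> j < i -> gen_group (TS i) (y j).
Proof.
  intros Hj Hji. destruct (Htri Hj) as (w & Hw & ->). apply gg_mul.
  apply gg_incl. left; eauto.
  apply gg_mono with (A := TS j); auto. apply TS_mono; lia.
Qed.

Lemma T_notS i : D i -> ~ gen_group (TS i) (y i).
Proof. intros Hi. destruct (Htri Hi) as (w & Hw & ->). apply T_T; auto. Qed.

Lemma T_inj i j : D i -> D j -> y i = y j -> i = j.
Proof.
  intros Hi Hj He. destruct (lt_eq_lt_dec i j) as [[H|H]|H]; auto.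
  - exfalso. apply (T_notS Hj). rewrite <- He. apply T_yS; auto.
  - exfalso. apply (T_notS Hi). rewrite He. apply T_yS; auto.
Qed.

Lemma T_notB i : D i -> ~ B (y i).
Proof. intros Hi Hb. apply (T_notS Hi). apply gg_incl. right; auto. Qed.

Lemma T_max (s : list G) : (forall g, In g s -> TY g) ->
  (forall g, In g s -> B g) \/
  exists i, D i /\ In (y i) s /\ forall g, In g s -> B g \/ exists j, D j /\ j <= i /\ y j = g.
Proof.
  induction s as [|a s IH]; intro Hs. left; intros g [].
  destruct IH as [IH|(i & Hi & Hin & Hall)]. intros; apply Hs; simpl; auto.
  - destruct (Hs a (or_introl eq_refl)) as [(k & Hk & <-)|Ha].
    + right. exists k. repeat split; simpl; auto.
      intros g [<-|Hg]. right; exists k; auto. left; auto.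
    + left. intros g [<-|Hg]; auto.
  - destruct (Hs a (or_introl eq_refl)) as [(k & Hk & <-)|Ha].
    + destruct (le_lt_dec k i).
      * right. exists i. repeat split; simpl; auto.
        intros g [<-|Hg]. right; exists k; auto. auto.
      * right. exists k. repeat split; simpl; auto.
        intros g [<-|Hg]. right; exists k; auto.
        destruct (Hall g Hg) as [?|(j & Hj & Hji & <-)]; auto. right; exists j; repeat split; auto; lia.
    + right. exists i. repeat split; simpl; auto.
      intros g [<-|Hg]; auto.
Qed.

Lemma T_prod i : D i -> forall s, NoDup s -> (forall g, In g s -> g = y i \/ gen_group (TS i) g) ->
  (In (y i) s -> exists z, gen_group (TS i) z /\ lprod s = mul (x i) z) /\
  (~ In (y i) s -> gen_group (TS i) (lprod s)).
Proof.
  intros Hi s Hn. induction Hn as [|g s Hg Hn IH]; intros Hs.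
  - split. intros []. intros _. apply gg_one.
  - destruct IH as [IH1 IH2]. intros; apply Hs; simpl; auto.
    destruct (Hs g (or_introl eq_refl)) as [->|HgS].
    + split.
      * intros _. destruct (Htri Hi) as (w & Hw & ->).
        exists (mul w (lprod s)). split. apply gg_mul; auto.
        rewrite lprod_cons, <- mulA; auto.
      * intro H; exfalso; apply H; simpl; auto.
    + split.
      * intros Hin. destruct (classic (g = y i)) as [->|Hne].
        { exfalso. apply (T_notS Hi); auto. }
        destruct Hin as [->|Hin]. congruence.
        destruct (IH1 Hin) as (z & Hz & Hz2).
        exists (mul (sgn (ac g (x i))) (mul g z)). split.
        apply gg_sgn_mul, gg_mul; auto.
        rewrite lprod_cons, Hz2, (mulA g), (ac_spec g (x i)), sgn_out, <- mulA, sgn_in. auto.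
      * intros Hnin. rewrite lprod_cons. apply gg_mul; auto. apply IH2. intro; apply Hnin; simpl; auto.
Qed.

Lemma T_basic : basic TY.
Proof.
  intros s Hn Hne Hs.
  destruct (@T_max s Hs) as [HB|(i & Hi & Hin & Hall)].
  - apply HX; auto. intros; right; auto.
  - assert (Hs2 : forall g, In g s -> g = y i \/ gen_group (TS i) g).
    { intros g Hg. destruct (Hall g Hg) as [Hb|(j & Hj & Hji & <-)].
      right; apply gg_incl; right; auto.
      destruct (Nat.eq_dec j i) as [->|Hne2]. left; auto. right; apply T_yS; auto; lia. }
    destruct (T_prod Hi Hn Hs2) as [H1 _]. destruct (H1 Hin) as (z & Hz & Hp).
    assert (Hnot := T_T Hi Hz). rewrite <- Hp in Hnot.
    split; intro He; apply Hnot; rewrite He. apply gg_one. apply (gg_sgn _ true).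
Qed.

Lemma T_span g : gen_group TX g <-> gen_group TY g.
Proof.
  split; apply gg_min.
  - intros h [(i & Hi & <-)|Hh]; [|apply gg_incl; right; auto].
    assert (Hall : forall n i, i < n -> D i -> gen_group TY (x i)).
    { induction n as [|n IH]; intros k Hk Hdk. lia.
      destruct (Htri Hdk) as (w & Hw & Hy).
      assert (Hw2 : gen_group TY w).
      { apply gg_min with (A := TS k); auto.
        intros h [(j & Hj & Hjk & <-)|Hh]. apply IH; auto; lia. apply gg_incl; right; auto. }
      apply gg_div with (h := w); auto. rewrite <- Hy. apply gg_incl; left; eauto. }
    apply (Hall (S i)); auto.
  - intros h [(i & Hi & <-)|Hh]; [|apply gg_incl; right; auto].
    destruct (Htri Hi) as (w & Hw & ->). apply gg_mul. apply gg_incl; left; eauto.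
    apply gg_mono with (A := TS i); auto. intros g0 [(j & Hj & _ & <-)|Hg0]; [left; eauto|right; auto].
Qed.

End TRI.


Lemma repl_ext (E1 E2 F1 F2 : gset G) : (forall g, E1 g <-> E2 g) -> (forall g, F1 g <-> F2 g) ->
  replacement E2 F2 -> replacement E1 F1.
Proof.
  intros HE HF [Hb Hs]. split.
  - unfold generator in *. apply basic_ext with (A := F2); firstorder.
  - intro g. rewrite (@gg_ext E1 E2 g HE), (@gg_ext F1 F2 g HF). auto.
Qed.

Lemma In_nth_iff (l : list G) g : In g l <-> exists i, i < length l /\ nth i l one = g.
Proof. split. apply In_nth. intros (i & Hi & <-). apply nth_In; auto. Qed.

Lemma w_left (A : gset G) w a : gen_group A w -> exists w', gen_group A w' /\ mul w a = mul a w'.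
Proof.
  intro H. exists (mul (sgn (ac w a)) w). split. apply gg_sgn_mul; auto.
  rewrite ac_spec, sgn_in; auto.
Qed.

Lemma LTRI (l l' : list G) (B : gset G) : length l' = length l ->
  basic (fun g => In g l \/ B g) -> NoDup l -> (forall g, In g l -> ~ B g) ->
  (forall i, i < length l -> exists w,
     gen_group (fun g => (exists j, j < i /\ nth j l one = g) \/ B g) w /\
     nth i l' one = mul (nth i l one) w) ->
  replacement (fun g => In g l \/ B g) (fun g => In g l' \/ B g) /\ NoDup l' /\
  (forall g, In g l' -> ~ B g).
Proof.
  intros Hlen Hb Hn Hd Ht.
  set (D := fun i => i < length l).
  set (x := fun i => nth i l one). set (y := fun i => nth i l' one).
  assert (EX : forall g, (In g l \/ B g) <-> TX D x B g).
  { intro g. unfold TX. rewrite In_nth_iff. firstorder. }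
  assert (EY : forall g, (In g l' \/ B g) <-> TY D y B g).
  { intro g. unfold TY. rewrite In_nth_iff, Hlen. firstorder. }
  assert (HX : basic (TX D x B)) by (apply basic_ext with (A := fun g => In g l \/ B g); firstorder).
  assert (Hinj : forall i j, D i -> D j -> x i = x j -> i = j).
  { apply NoDup_nth; auto. }
  assert (Hdisj : forall i, D i -> ~ B (x i)).
  { intros i Hi. apply Hd. apply nth_In; auto. }
  assert (Htri : forall i, D i -> exists w, gen_group (TS D x B i) w /\ y i = mul (x i) w).
  { intros i Hi. destruct (Ht i Hi) as (w & Hw & Hw2). exists w. split; auto.
    apply gg_mono with (2 := Hw). intros g [(j & Hj & <-)|Hg]; [left|right; auto].
    exists j. unfold D, x. repeat split; auto. unfold D in Hi. lia. }
  split; [|split].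
  - apply repl_ext with (E2 := TX D x B) (F2 := TY D y B); auto.
    split. eapply T_basic; eauto. intro g; eapply T_span; eauto.
  - apply (NoDup_nth l' one). rewrite Hlen. intros i j Hi Hj He.
    eapply T_inj; eauto.
  - intros g Hg. apply In_nth_iff in Hg. destruct Hg as (i & Hi & <-).
    apply (@T_notB D x y B HX Hinj Hdisj Htri i). unfold D; lia.
Qed.


Lemma ac_lprod_out (l : list G) k : (forall a, In a l -> ac a k = true) -> ac (lprod l) k = Nat.odd (length l).
Proof.
  induction l as [|a l IH]; intro H. apply ac_one.
  rewrite lprod_cons, ac_mull, H, IH. simpl length. rewrite Nat.odd_succ, <- Nat.negb_odd. auto.
  intros; apply H; simpl; auto. simpl; auto.
Qed.

Lemma ac_lprod_in (l : list G) k : NoDup l -> In k l -> (forall a, In a l -> a <> k -> ac a k = true) ->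
  ac (lprod l) k = Nat.even (length l).
Proof.
  induction 1 as [|a l Ha Hn IH]; intros Hk H. destruct Hk.
  rewrite lprod_cons, ac_mull. replace (length (a :: l)) with (S (length l)) by reflexivity. rewrite Nat.even_succ.
  destruct (classic (a = k)) as [->|Hne].
  - rewrite ac_refl, ac_lprod_out; auto. intros b Hb. apply H; simpl; auto. intros ->; contradiction.
  - destruct Hk as [->|Hk]. congruence.
    rewrite H, IH. rewrite <- Nat.negb_odd. destruct (Nat.odd (length l)); auto. all: try (simpl; auto; fail). auto. intros b Hb Hbk; apply H; simpl; auto.
Qed.

Lemma comm_ac a b : commutes a b -> ac a b = false.
Proof. apply ac_comm. Qed.
Lemma anti_ac a b : anticommutes a b -> ac a b = true.
Proof. apply ac_anti. Qed.

Lemma P5 : forall (K : list G) (M : gset G),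
     let E := fun x => In x K \/ M x in
     generator E -> NoDup K -> (forall x, In x K -> ~ M x) ->
     set_commute (fun x => In x K) M ->
     anticommutative (fun x => In x K) -> commutative M ->
     (Nat.Even (length K) -> (exists x, M x) ->
        exists (K' : list G) (M' : gset G),
          let E' := fun x => In x K' \/ M' x in
          replacement E E' /\ NoDup K' /\ (forall x, In x K' -> ~ M' x) /\
          set_commute (fun x => In x K') M' /\
          anticommutative (fun x => In x K') /\ commutative M' /\
          length K' = length K + 1 /\
          exists m0, M m0 /\ equinumerous M' (fun x => M x /\ x <> m0))
     /\
     (Nat.Odd (length K) ->
        exists (K' : list G) (M' : gset G),
          let E' := fun x => In x K' \/ M' x in
          replacement E E' /\ NoDup K' /\ (forall x, In x K' -> ~ M' x) /\
          set_commute (fun x => In x K') M' /\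
          anticommutative (fun x => In x K') /\ commutative M' /\
          length K' + 1 = length K /\
          exists m0, M' m0 /\ equinumerous M (fun x => M' x /\ x <> m0)).
Proof.
  intros K M E HE HnK HKM HsKM HaK HcM.
  assert (acK : forall a b, In a K -> In b K -> a <> b -> ac a b = true).
  { intros; apply anti_ac, HaK; auto. }
  assert (acKM : forall a b, In a K -> M b -> ac a b = false).
  { intros; apply comm_ac, HsKM; auto. }
  assert (acM : forall a b, M a -> M b -> ac a b = false).
  { intros; apply comm_ac, HcM; auto. }
  assert (PM : forall m, M m -> ac (lprod K) m = false).
  { intros m Hm. apply ac_lprod_false. intros; apply acKM; auto. }
  assert (PK : forall k, In k K -> ac (lprod K) k = Nat.even (length K)).
  { intros k Hk. apply ac_lprod_in; auto. }
  split.
  - intros Hev [m0 Hm0].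
    set (z := mul m0 (lprod K)).
    set (B := fun g => M g /\ g <> m0).
    assert (Hm0K : ~ In m0 K) by (intro H; apply (HKM m0); auto).
    assert (L := @LTRI (K ++ [m0]) (K ++ [z]) B).
    destruct L as (Hr & Hn' & Hd').
    + rewrite !length_app; auto.
    + apply basic_ext with (A := E); auto. intro g. unfold E, B. rewrite in_app_iff. simpl.
      split. intros [H|H]; auto. destruct (classic (g = m0)) as [->|Hne]; auto.
      intros [[H|[H|[]]]|[H _]]; subst; auto.
    + apply NoDup_app; auto. repeat constructor; auto. intros a Ha [->|[]]; auto.
    + intros g Hg [H1 H2]. apply in_app_iff in Hg. destruct Hg as [Hg|[->|[]]]; auto.
      apply (HKM g); auto.
    + intros i Hi. rewrite length_app in Hi. simpl in Hi.
      destruct (Nat.eq_dec i (length K)) as [->|Hne].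
      * exists (lprod K). split.
        -- apply gg_lprod. intros g Hg. apply gg_incl. left. apply In_nth_iff in Hg.
           destruct Hg as (j & Hj & <-). exists j. split; auto. apply app_nth1; auto.
        -- rewrite !nth_middle. auto.
      * exists one. split. apply gg_one. rewrite !app_nth1 by lia. rewrite sg_mul1r. auto.
    + exists (K ++ [z]), B. simpl.
      assert (HzK : forall k, In k K -> ac z k = true).
      { intros k Hk. unfold z. rewrite ac_mull, PK, ac_sym, acKM; auto.
        apply Nat.even_spec; auto. }
      assert (HzM : forall m, B m -> ac z m = false).
      { intros m [Hm _]. unfold z. rewrite ac_mull, PM, acM; auto. }
      refine (conj _ (conj _ (conj _ (conj _ (conj _ (conj _ (conj _ _))))))).
      * apply repl_ext with (E2 := fun g => In g (K ++ [m0]) \/ B g) (F2 := fun g => In g (K ++ [z]) \/ B g); auto.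
        -- intro g. unfold E, B. rewrite in_app_iff. simpl.
           split. intros [H|H]; auto. destruct (classic (g = m0)) as [->|Hne]; auto.
           intros [[H|[H|[]]]|[H _]]; subst; auto.
        -- intro g; tauto.
      * auto.
      * intros g Hg; apply Hd'; auto.
      * intros a b Ha Hb. apply ac_comm. apply in_app_iff in Ha. destruct Ha as [Ha|[<-|[]]].
        destruct Hb; apply acKM; auto. apply HzM; auto.
      * intros a b Ha Hb Hab. apply ac_anti.
        apply in_app_iff in Ha, Hb. destruct Ha as [Ha|[<-|[]]], Hb as [Hb|[<-|[]]].
        apply acK; auto. rewrite ac_sym; auto. auto. congruence.
      * intros a b [Ha _] [Hb _]. apply HcM; auto.
      * rewrite length_app; auto.
      * exists m0. split; auto. exists (fun g => g). split; [|split]. intros g Hg; exact Hg. auto. intros g Hg; exists g; auto.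

  - intros Hodd.
    assert (HK : K <> []) by (intros ->; destruct Hodd as [k Hk]; simpl in Hk; lia).
    destruct (exists_last HK) as (K0 & k0 & HK0).
    set (P := lprod K).
    set (B := M).
    assert (HnK0 : NoDup K0) by (rewrite HK0 in HnK; apply NoDup_app_remove_r in HnK; auto).
    assert (L := @LTRI K (K0 ++ [P]) B).
    destruct L as (Hr & Hn' & Hd').
    + rewrite HK0, !length_app; auto.
    + auto.
    + auto.
    + auto.
    + intros i Hi.
      assert (Hlen : length K = length K0 + 1) by (rewrite HK0, length_app; auto).
      destruct (Nat.eq_dec i (length K0)) as [->|Hne].
      * exists (mul (sgn (ac (lprod K0) k0)) (lprod K0)). split.
        -- apply gg_sgn_mul, gg_lprod. intros g Hg. apply gg_incl. left. apply In_nth_iff in Hg.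
           destruct Hg as (j & Hj & <-). exists j. split; auto. rewrite HK0. apply app_nth1; auto.
        -- rewrite nth_middle. unfold P. rewrite HK0, nth_middle, lprod_app.
           unfold lprod at 2. simpl. rewrite sg_mul1r, ac_spec, sgn_in. auto.
      * exists one. split. apply gg_one. rewrite app_nth1 by lia. rewrite HK0, app_nth1 by lia.
        rewrite sg_mul1r; auto.
    + assert (HK0K : forall g, In g K0 -> In g K) by (intros g Hg; rewrite HK0; apply in_app_iff; auto).
      assert (HPK : forall k, In k K -> ac P k = false).
      { intros k Hk. unfold P. rewrite PK; auto. pose proof (proj2 (Nat.odd_spec _) Hodd) as Ho.
        rewrite <- Nat.negb_odd, Ho; auto. }
      assert (HPnotM : ~ M P) by (apply Hd'; apply in_app_iff; simpl; auto).
      assert (HPnotK0 : ~ In P K0).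
      { intro H. apply NoDup_remove_2 in Hn'. apply Hn'. rewrite app_nil_r; auto. }
      exists K0, (fun g => M g \/ g = P). simpl.
      refine (conj _ (conj _ (conj _ (conj _ (conj _ (conj _ (conj _ _))))))).
      * apply repl_ext with (E2 := fun g => In g K \/ B g) (F2 := fun g => In g (K0 ++ [P]) \/ B g); auto.
        -- intro g; unfold E, B; tauto.
        -- intro g. unfold B. rewrite in_app_iff. simpl. split; intros [H|H]; try tauto. destruct H as [H|H]; [tauto|subst; tauto]. destruct H as [H|[H|[]]]; [tauto|subst; tauto].
      * auto.
      * intros g Hg [H|H]. apply (HKM g); auto. subst; auto.
      * intros a b Ha [Hb| ->]. apply HsKM; auto. apply ac_comm. rewrite ac_sym; auto.
      * intros a b Ha Hb Hab. apply HaK; auto.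
      * intros a b [Ha| ->] [Hb| ->]. apply HcM; auto. apply ac_comm; rewrite ac_sym; apply PM; auto.
        apply ac_comm; apply PM; auto. apply ac_comm, ac_refl.
      * rewrite HK0, length_app; auto.
      * exists P. split; auto. exists (fun g => g). split; [|split].
        intros g Hg; split; [left; auto| intros ->; contradiction]. auto.
        intros g [[Hg|Hg] Hne]; [exists g; auto|contradiction].
Qed.


Lemma anti_neq (a b : G) : anticommutes a b -> a <> b.
Proof. intros H ->. apply ac_anti in H. rewrite ac_refl in H. discriminate. Qed.

Ltac third_tac := split; [intro g; simpl; tauto |
  constructor; [simpl; intros [H|[H|[]]]; congruence | constructor; [simpl; intros [H|[]]; congruence | constructor; [intros [] | constructor]]]].

Lemma third (s0 s1 s2 x y : G) : NoDup [s0; s1; s2] -> In x [s0; s1; s2] -> In y [s0; s1; s2] -> x <> y ->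
  exists c, (forall g, In g [s0; s1; s2] <-> In g [x; y; c]) /\ NoDup [x; y; c].
Proof.
  intros Hn Hx Hy Hxy.
  inversion Hn as [|? ? H0 H1]; subst. inversion H1 as [|? ? H2 H3]; subst.
  assert (d01 : s0 <> s1) by (intro; apply H0; simpl; auto).
  assert (d02 : s0 <> s2) by (intro; apply H0; simpl; auto).
  assert (d12 : s1 <> s2) by (intro; apply H2; simpl; auto).
  simpl in Hx, Hy.
  destruct Hx as [<-|[<-|[<-|[]]]]; destruct Hy as [<-|[<-|[<-|[]]]]; try congruence;
  first [ exists s0; third_tac | exists s1; third_tac | exists s2; third_tac ].
Qed.

Lemma P1 : forall (n : nat) (E : gset G),
     (n = 2 \/ n = 3) -> basic E -> has_card E n ->
     (exists x y, E x /\ E y /\ anticommutes x y) ->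
     exists E', replacement E E' /\ anticommutative E'.
Proof.
  intros n E Hn HE (s & Hs & Hlen & HEs) (x & y & Hx & Hy & Hxy).
  assert (Hxy' := anti_neq Hxy). apply ac_anti in Hxy.
  apply HEs in Hx, Hy.
  destruct Hn as [->| ->].
  - exists E. split. split; auto. intro; tauto.
    destruct s as [|s0 [|s1 [|? ?]]]; simpl in Hlen; try discriminate.
    intros a b Ha Hb Hab. apply HEs in Ha, Hb. apply ac_anti.
    simpl in Ha, Hb, Hx, Hy.
    destruct Ha as [<-|[<-|[]]]; destruct Hb as [<-|[<-|[]]]; try congruence;
    destruct Hx as [<-|[<-|[]]]; destruct Hy as [<-|[<-|[]]]; try congruence;
    auto; rewrite ac_sym; auto.
  - destruct s as [|s0 [|s1 [|s2 [|? ?]]]]; simpl in Hlen; try discriminate.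
    destruct (third Hs Hx Hy Hxy') as (c & Hc & Hn3).
    set (w := mul (if ac c y then one else x) (if ac c x then one else y)).
    set (l' := [x; y; mul c w]).
    assert (L := @LTRI [x; y; c] l' (fun _ => False)).
    destruct L as (Hr & Hn' & _).
    + reflexivity.
    + apply basic_ext with (A := E); auto. intro g. rewrite HEs, Hc. tauto.
    + auto.
    + auto.
    + intros i Hi. simpl in Hi.
      destruct i as [|[|[|i]]]; try lia.
      * exists one; split. apply gg_one. simpl. rewrite sg_mul1r; auto.
      * exists one; split. apply gg_one. simpl. rewrite sg_mul1r; auto.
      * exists w; split; [|reflexivity]. unfold w. apply gg_mul.
        destruct (ac c y). apply gg_one. apply gg_incl. left. exists 0. split; auto.
        destruct (ac c x). apply gg_one. apply gg_incl. left. exists 1. split; auto.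
    + exists (fun g => In g l'). split.
      * apply repl_ext with (E2 := fun g => In g [x; y; c] \/ False) (F2 := fun g => In g l' \/ False); auto.
        intro g. rewrite HEs, Hc. tauto. intro g; tauto.
      * assert (A1 : ac (mul c w) x = true).
        { unfold w. rewrite !ac_mull. destruct (ac c y), (ac c x) eqn:E1; simpl;
          rewrite ?ac_one, ?ac_refl, ?E1; try rewrite (ac_sym x y), Hxy; auto. }
        assert (A2 : ac (mul c w) y = true).
        { unfold w. rewrite !ac_mull. destruct (ac c y) eqn:E1, (ac c x); simpl;
          rewrite ?ac_one, ?ac_refl, ?E1, ?Hxy; auto. }
        intros a b Ha Hb Hab. apply ac_anti. unfold l' in Ha, Hb. simpl in Ha, Hb.
        destruct Ha as [<-|[<-|[<-|[]]]]; destruct Hb as [<-|[<-|[<-|[]]]]; try congruence;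
        auto; rewrite ac_sym; auto.
Qed.


Lemma hb i : 2 * ((i - 1) / 2) <= i - 1 /\ i - 1 <= 2 * ((i - 1) / 2) + 1.
Proof. pose proof (Nat.div_mod (i-1) 2). pose proof (Nat.mod_upper_bound (i-1) 2). lia. Qed.

Definition injon (N : option nat) (x : nat -> G) := forall i j, idx N i -> idx N j -> x i = x j -> i = j.

Lemma idx_le N i j : idx N j -> 1 <= i -> i <= j -> idx N i.
Proof. destruct N; unfold idx; intuition lia. Qed.

Lemma NTRI (N : option nat) (x y : nat -> G) : basic (seq_set N x) -> injon N x ->
  (forall i, idx N i -> exists w,
     gen_group (fun g => exists j, idx N j /\ j < i /\ x j = g) w /\ y i = mul (x i) w) ->
  replacement (seq_set N x) (seq_set N y) /\ injon N y.
Proof.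
  intros Hb Hinj Ht.
  assert (HX : basic (TX (idx N) x (fun _ => False))).
  { apply basic_ext with (A := seq_set N x); auto. intro g; unfold TX, seq_set; firstorder. }
  assert (Hdisj : forall i, idx N i -> ~ (fun _ : G => False) (x i)) by auto.
  assert (Htri : forall i, idx N i -> exists w, gen_group (TS (idx N) x (fun _ => False) i) w /\ y i = mul (x i) w).
  { intros i Hi. destruct (Ht i Hi) as (w & Hw & Hy). exists w; split; auto.
    apply gg_mono with (2 := Hw). intros g H; left; auto. }
  split.
  - apply repl_ext with (E2 := TX (idx N) x (fun _ => False)) (F2 := TY (idx N) y (fun _ => False)).
    intro g; unfold TX, seq_set; firstorder. intro g; unfold TY, seq_set; firstorder.
    split. eapply T_basic; eauto. intro g; eapply T_span; eauto.
  - intros i j Hi Hj He. eapply T_inj; eauto.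
Qed.

Lemma gg_prefix (N : option nat) (x : nat -> G) i L : (forall j, In j L -> idx N j /\ j < i) ->
  gen_group (fun g => exists j, idx N j /\ j < i /\ x j = g) (lprod (map x L)).
Proof.
  intro H. apply gg_lprod. intros g Hg. apply in_map_iff in Hg. destruct Hg as (j & <- & Hj).
  apply gg_incl. exists j. destruct (H j Hj); auto.
Qed.

Lemma gg_prefix_w (N : option nat) (x : nat -> G) i L : (forall j, In j L -> idx N j /\ j < i) ->
  exists w, gen_group (fun g => exists j, idx N j /\ j < i /\ x j = g) w /\
    mul (lprod (map x L)) (x i) = mul (x i) w.
Proof. intro H. apply w_left. apply gg_prefix; auto. Qed.

Fixpoint ins (k : nat) (l : list nat) : list nat :=
  match l with [] => [k] | a :: r => if k <? a then k :: a :: r else a :: ins k r end.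
Fixpoint isort (l : list nat) : list nat :=
  match l with [] => [] | a :: r => ins a (isort r) end.

Lemma ins_perm k l : Permutation (k :: l) (ins k l).
Proof.
  induction l as [|a l IH]; simpl. auto.
  destruct (k <? a). auto. eapply perm_trans. apply perm_swap. auto.
Qed.

Lemma isort_perm l : Permutation l (isort l).
Proof. induction l; simpl. auto. eapply perm_trans. 2: apply ins_perm. auto. Qed.

Lemma ins_sorted k l : StronglySorted lt l -> ~ In k l -> StronglySorted lt (ins k l).
Proof.
  induction l as [|a l IH]; intros Hs Hk; simpl. repeat constructor.
  inversion Hs as [|? ? Hs1 Hs2]; subst.
  destruct (Nat.ltb_spec k a).
  - constructor; auto. constructor; auto. rewrite Forall_forall in *. intros z Hz. apply Hs2 in Hz. lia.
  - constructor. apply IH; auto. intro; apply Hk; simpl; auto.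
    rewrite Forall_forall in *. intros z Hz.
    apply (Permutation_in (l' := k :: l)) in Hz. 2: apply Permutation_sym, ins_perm.
    destruct Hz as [<-|Hz]. assert (k <> a) by (intro; apply Hk; simpl; auto). lia. auto.
Qed.

Lemma isort_sorted l : NoDup l -> StronglySorted lt (isort l).
Proof.
  induction 1; simpl. constructor. apply ins_sorted; auto.
  intro H1. apply H. apply Permutation_in with (l := isort l); auto. apply Permutation_sym, isort_perm.
Qed.

Lemma lists_of (N : option nat) (x : nat -> G) s : (forall g, In g s -> seq_set N x g) ->
  exists l, map x l = s /\ forall k, In k l -> idx N k.
Proof.
  induction s as [|g s IH]; intro H. exists []; split; simpl; auto; intros k [].
  destruct IH as (l & Hl & Hl2). intros; apply H; simpl; auto.
  destruct (H g (or_introl eq_refl)) as (k & Hk & Hkg).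
  exists (k :: l). simpl. rewrite Hl, Hkg. split; auto. intros k' [<-|Hk']; auto.
Qed.

Lemma basic_of_seq (N : option nat) (x : nat -> G) : basic_seq N x -> basic (seq_set N x).
Proof.
  intros Hb s Hn Hne Hs. destruct (@lists_of N x s Hs) as (l & <- & Hl).
  assert (Hnl := NoDup_map_inv _ _ Hn).
  assert (Hp := isort_perm l).
  destruct (lprod_perm (Permutation_map x Hp)) as [b Hb2].
  assert (Hne2 : isort l <> []).
  { intro H. rewrite H in Hp. apply Permutation_sym, Permutation_nil in Hp. subst. apply Hne; auto. }
  destruct (Hb (isort l) Hne2) as [H1 H2].
  - apply StronglySorted_Sorted, isort_sorted; auto.
  - intros k Hk. apply Hl. apply Permutation_in with (l := isort l); auto. apply Permutation_sym; auto.
  - assert (Hc : forall c, lprod (map x l) <> sgn c).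
    { intros c Hc. rewrite Hc, sgn_sgn in Hb2. destruct (xorb b c); auto. }
    split; [apply (Hc false)|apply (Hc true)].
Qed.

Lemma nodup_map_inj (N : option nat) (x : nat -> G) l : injon N x -> NoDup l ->
  (forall k, In k l -> idx N k) -> NoDup (map x l).
Proof.
  intros Hi. induction 1 as [|a l Ha Hn IH]; intro Hl; simpl. constructor.
  constructor. intro H. apply in_map_iff in H. destruct H as (b & Hb & Hbl).
  apply Hi in Hb; auto. subst; auto. apply Hl; simpl; auto. apply Hl; simpl; auto.
  apply IH. intros; apply Hl; simpl; auto.
Qed.

Lemma seq_of_basic (N : option nat) (x : nat -> G) : basic (seq_set N x) -> injon N x -> basic_seq N x.
Proof.
  intros Hb Hi l Hne Hs Hl.
  apply Sorted_StronglySorted in Hs. 2: intros a b c; lia.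
  assert (Hn : NoDup l).
  { clear -Hs. induction Hs as [|a l Hs IH Hf]; constructor; auto.
    rewrite Forall_forall in Hf. intro H. apply Hf in H. lia. }
  apply Hb. apply nodup_map_inj with (N := N); auto.
  destruct l; simpl; congruence.
  intros g Hg. apply in_map_iff in Hg. destruct Hg as (k & <- & Hk). exists k; auto.
Qed.


Lemma inj_of_seq (N : option nat) (x : nat -> G) : basic_seq N x -> injon N x.
Proof.
  intros Hb i j Hi Hj He.
  assert (Hsq : forall a b, idx N a -> idx N b -> a < b -> x a = x b -> False).
  { intros a b Ha Hb' Hab Heq. destruct (Hb [a; b]) as [H1 H2].
    - discriminate.
    - repeat constructor. lia.
    - intros k [<-|[<-|[]]]; auto.
    - simpl in H1, H2. unfold lprod in H1, H2. simpl in H1, H2. rewrite sg_mul1r, Heq in H1, H2.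
      destruct (sq_sgn (x b)) as [c Hc]. rewrite Hc in H1, H2. destruct c; auto. }
  destruct (lt_eq_lt_dec i j) as [[H|H]|H]; auto; exfalso; eauto.
Qed.

Lemma lprod_seq_last (u : nat -> G) k : 1 <= k -> lprod (map u (seq 1 k)) = mul (lprod (map u (seq 1 (k - 1)))) (u k).
Proof.
  intro Hk. replace k with (S (k - 1)) at 1 by lia. rewrite seq_S, map_app, lprod_app.
  simpl. unfold lprod at 2. simpl. rewrite sg_mul1r. do 2 f_equal. lia.
Qed.

Lemma P2 : forall (N : option nat) (u : nat -> G),
     basic_seq N u ->
     (forall k, idx N k -> idx N (S k) -> anticommutes (u k) (u (S k))) ->
     (forall i j, idx N i -> idx N j -> (i + 2 <= j \/ j + 2 <= i) ->
        commutes (u i) (u j)) ->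
     let e := fun k => lprod (map u (seq 1 k)) in
     basic_seq N e /\
     (forall i j, idx N i -> idx N j -> i <> j -> anticommutes (e i) (e j)) /\
     (forall x, gen_group (seq_set N u) x <-> gen_group (seq_set N e) x) /\
     (forall k, idx N k ->
        u k = sg_mul (e (k - 1)) (e k) \/
        u k = sg_mul sg_neg1 (sg_mul (e (k - 1)) (e k))).
Proof.
  intros N u Hb Hadj Hfar e.
  assert (HB := basic_of_seq Hb). assert (Hi := inj_of_seq Hb).
  assert (He1 : forall k, 1 <= k -> e k = mul (e (k - 1)) (u k)).
  { intros k Hk. unfold e. apply lprod_seq_last; auto. }
  assert (Hidx1 : forall k, idx N k -> 1 <= k) by (intros k [H _]; auto).
  destruct (@NTRI N u e HB Hi) as [[Hgen Hspan] Hinj].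
  { intros i Hii. rewrite He1 by auto. unfold e. apply gg_prefix_w.
    intros j Hj. apply in_seq in Hj. split. apply idx_le with (j := i); auto; lia. lia. }
  assert (Hfar' : forall a b, idx N a -> idx N b -> a + 2 <= b -> ac (u a) (u b) = false).
  { intros; apply comm_ac, Hfar; auto. }
  assert (Hac : forall i j, idx N i -> idx N j -> i < j -> ac (e i) (e j) = true).
  { intros i j Hii Hij Hlt.
    assert (Hi1 := Hidx1 i Hii).
    assert (Ej : e j = mul (e i) (lprod (map u (seq (1 + i) (j - i))))).
    { unfold e. replace j with (i + (j - i)) at 1 by lia. rewrite seq_app, map_app, lprod_app. auto. }
    rewrite Ej, ac_mulr, ac_refl, xorb_false_l.
    rewrite He1 by auto. rewrite ac_mull.
    assert (X1 : ac (e (i-1)) (lprod (map u (seq (1+i) (j-i)))) = false).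
    { unfold e. apply ac_lprod_false. intros a Ha. apply in_map_iff in Ha. destruct Ha as (a' & <- & Ha).
      apply in_seq in Ha. rewrite ac_sym. apply ac_lprod_false. intros b Hb3.
      apply in_map_iff in Hb3. destruct Hb3 as (b' & <- & Hb3). apply in_seq in Hb3.
      rewrite ac_sym. apply Hfar'. apply idx_le with (j := i); auto; lia. apply idx_le with (j := j); auto; lia. lia. }
    rewrite X1, xorb_false_l.
    replace (j - i) with (S (j - i - 1)) by lia. simpl seq. rewrite map_cons, lprod_cons, (ac_mulr _ _ (u i)).
    assert (HSi : idx N (S i)) by (apply idx_le with (j := j); auto; lia).
    rewrite (anti_ac (Hadj i Hii HSi)).
    rewrite ac_sym, ac_lprod_false. auto.
    intros a Ha. apply in_map_iff in Ha. destruct Ha as (b & <- & Hb2). apply in_seq in Hb2.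
    rewrite ac_sym. apply Hfar'; auto. apply idx_le with (j := j); auto; lia. lia. }
  split; [|split; [|split]].
  - apply seq_of_basic; auto.
  - intros i j Hii Hij Hne. apply ac_anti.
    destruct (Nat.lt_gt_cases i j) as [[H|H] _]; auto. rewrite ac_sym; auto.
  - intro g; apply Hspan.
  - intros k Hk. rewrite (He1 k) by auto. rewrite (mulA (e (k-1)) (e (k-1)) (u k)). destruct (sq_sgn (e (k - 1))) as [b Hb2].
    rewrite Hb2. destruct b; simpl; [right|left].
    rewrite mulA, sg_neg1_sq, sg_mul1; auto. rewrite sg_mul1; auto.
Qed.


Definition dbl (N : option nat) : option nat :=
  match N with Some n => Some (2 * n) | None => None end.
Definition okm (N : option nat) (m : nat) : Prop :=
  match N with Some n => m <= n | None => True end.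

Lemma okm_le N m m' : okm N m -> m' <= m -> okm N m'.
Proof. intros; unfold okm, idx, dbl in *; destruct N; lia. Qed.
Lemma okm_idx N m : okm N (S m) -> idx N (S m).
Proof. intros; unfold okm, idx, dbl in *; destruct N; lia. Qed.
Lemma idx_okm N m : idx N m -> okm N m.
Proof. intros; unfold okm, idx, dbl in *; destruct N; lia. Qed.
Lemma idx_dbl1 N m : okm N (S m) -> idx (dbl N) (2 * m + 1).
Proof. intros; unfold okm, idx, dbl in *; destruct N; lia. Qed.
Lemma idx_dbl2 N m : okm N (S m) -> idx (dbl N) (2 * m + 2).
Proof. intros; unfold okm, idx, dbl in *; destruct N; lia. Qed.
Lemma idx_dbl_half N i : idx (dbl N) i -> okm N ((i - 1) / 2).
Proof. intros; pose proof (hb i); unfold okm, idx, dbl in *; destruct N; lia. Qed.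
Lemma idx_dbl_ge1 N i : idx (dbl N) i -> 1 <= i.
Proof. intros; unfold okm, idx, dbl in *; destruct N; lia. Qed.
Lemma idx_dbl_iff N i : idx (dbl N) i <-> exists k, idx N k /\ (i = 2 * k - 1 \/ i = 2 * k).
Proof.
  unfold idx, dbl; destruct N; split.
  - intros [H1 H2]. destruct (Nat.Even_or_Odd i) as [[h Hh]|[h Hh]].
    exists h; lia. exists (S h); lia.
  - intros (k & Hk & H); lia.
  - intros [H1 _]. destruct (Nat.Even_or_Odd i) as [[h Hh]|[h Hh]].
    exists h; lia. exists (S h); lia.
  - intros (k & Hk & H); lia.
Qed.

Section PT.
Variable N : option nat.
Variable x : nat -> G.

Definition PP (m : nat) : G := lprod (map x (seq 1 (2 * m))).
Definition yT (i : nat) : G := mul (PP ((i - 1) / 2)) (x i).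

Hypothesis HQ : forall m j, okm N (S m) -> idx (dbl N) j ->
  xorb (ac (x (2 * m + 1)) (x j)) (ac (x (2 * m + 2)) (x j)) = ((j =? 2 * m + 1) || (j =? 2 * m + 2)).

Lemma PP_step m : PP (S m) = mul (PP m) (mul (x (2 * m + 1)) (x (2 * m + 2))).
Proof.
  unfold PP. replace (2 * S m) with (2 * m + 2) by lia. rewrite seq_app, map_app, lprod_app.
  f_equal. unfold lprod. cbn [seq map fold_right]. rewrite sg_mul1r. f_equal; f_equal; lia.
Qed.

Lemma PP_ac_x m j : okm N m -> idx (dbl N) j -> ac (PP m) (x j) = (j <=? 2 * m).
Proof.
  intros Hm Hj. assert (Hj1 := @idx_dbl_ge1 N j Hj). induction m as [|m IH].
  - unfold PP. simpl. rewrite ac_one. destruct j; [lia|auto].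
  - rewrite PP_step, ac_mull, ac_mull, HQ, IH; auto. 2: apply okm_le with (S m); auto.
    destruct (Nat.leb_spec j (2 * m)), (Nat.eqb_spec j (2 * m + 1)), (Nat.eqb_spec j (2 * m + 2)),
      (Nat.leb_spec j (2 * S m)); simpl; try reflexivity; exfalso; lia.
Qed.

Lemma PP_ac_PP m m' : okm N m -> okm N m' -> ac (PP m) (PP m') = false.
Proof.
  intros Hm Hm'. induction m as [|m IH].
  - unfold PP; simpl. apply ac_one.
  - rewrite PP_step, ac_mull, ac_mull, IH. 2: apply okm_le with (S m); auto.
    rewrite (ac_sym (PP m')), (ac_sym (PP m')), !PP_ac_x; auto.
    2: apply idx_dbl2; auto. 2: apply idx_dbl1; auto.
    destruct (Nat.leb_spec (2 * m + 1) (2 * m')), (Nat.leb_spec (2 * m + 2) (2 * m')); simpl;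
      try reflexivity; exfalso; lia.
Qed.

Lemma yT_ac i j : idx (dbl N) i -> idx (dbl N) j ->
  ac (yT i) (yT j) = xorb (xorb (j <=? 2 * ((i - 1) / 2)) (i <=? 2 * ((j - 1) / 2))) (ac (x i) (x j)).
Proof.
  intros Hi Hj. unfold yT. rewrite ac_mull, !ac_mulr, PP_ac_PP, PP_ac_x, (ac_sym (PP _) (x i)), PP_ac_x;
    auto using idx_dbl_half.
  destruct (j <=? _), (i <=? _), (ac (x i) (x j)); auto.
Qed.

Lemma yT_repl : basic (seq_set (dbl N) x) -> injon (dbl N) x ->
  replacement (seq_set (dbl N) x) (seq_set (dbl N) yT) /\ injon (dbl N) yT.
Proof.
  intros Hb Hi. apply NTRI; auto. intros i Hii. unfold yT, PP. apply gg_prefix_w.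
  intros j Hj. apply in_seq in Hj. pose proof (hb i). pose proof (@idx_dbl_ge1 N i Hii).
  split. apply idx_le with (j := i); auto; lia. lia.
Qed.

End PT.


Ltac hbs i := pose proof (hb i).

Lemma chain_of_anti (N : option nat) (x : nat -> G) :
  basic (seq_set (dbl N) x) -> injon (dbl N) x ->
  (forall i j, idx (dbl N) i -> idx (dbl N) j -> i <> j -> ac (x i) (x j) = true) ->
  exists y, replacement (seq_set (dbl N) x) (seq_set (dbl N) y) /\ injon (dbl N) y /\
    (forall i j, idx (dbl N) i -> idx (dbl N) j -> (i - 1) / 2 = (j - 1) / 2 -> i <> j ->
       ac (y i) (y j) = true) /\
    (forall i j, idx (dbl N) i -> idx (dbl N) j -> (i - 1) / 2 <> (j - 1) / 2 ->
       ac (y i) (y j) = false).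
Proof.
  intros Hb Hi HA.
  assert (HQ : forall m j, okm N (S m) -> idx (dbl N) j ->
    xorb (ac (x (2 * m + 1)) (x j)) (ac (x (2 * m + 2)) (x j)) = ((j =? 2 * m + 1) || (j =? 2 * m + 2))).
  { intros m j Hm Hj.
    assert (H1 := @idx_dbl1 N m Hm). assert (H2 := @idx_dbl2 N m Hm).
    destruct (Nat.eq_dec j (2 * m + 1)) as [->|Hn1]; [| destruct (Nat.eq_dec j (2 * m + 2)) as [->|Hn2]].
    - rewrite ac_refl, HA; auto; try lia. rewrite Nat.eqb_refl. reflexivity.
    - rewrite ac_refl, HA; auto; try lia. rewrite Nat.eqb_refl, orb_true_r. reflexivity.
    - rewrite !HA; auto. destruct (Nat.eqb_spec j (2 * m + 1)), (Nat.eqb_spec j (2 * m + 2)); try lia.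
      reflexivity. }
  destruct (@yT_repl N x Hb Hi) as [Hr Hinj].
  exists (yT x). split; [|split; [|split]]; auto.
  - intros i j Hii Hij Hh Hne. rewrite (@yT_ac N x HQ i j), HA; auto.
    hbs i; hbs j. assert (1 <= i) by (apply (@idx_dbl_ge1 N i); auto).
    assert (1 <= j) by (apply (@idx_dbl_ge1 N j); auto).
    destruct (Nat.leb_spec j (2 * ((i - 1) / 2))), (Nat.leb_spec i (2 * ((j - 1) / 2))); simpl;
      try reflexivity; exfalso; lia.
  - intros i j Hii Hij Hh. rewrite (@yT_ac N x HQ i j), HA; auto. all: try (intros ->; apply Hh; reflexivity).
    hbs i; hbs j. assert (1 <= i) by (apply (@idx_dbl_ge1 N i); auto).
    assert (1 <= j) by (apply (@idx_dbl_ge1 N j); auto).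
    destruct (Nat.leb_spec j (2 * ((i - 1) / 2))), (Nat.leb_spec i (2 * ((j - 1) / 2))); simpl;
      try reflexivity; exfalso; lia.
Qed.

Lemma partner N i : idx (dbl N) i -> exists i', idx (dbl N) i' /\ i' <> i /\ (i' - 1) / 2 = (i - 1) / 2.
Proof.
  intro Hi. apply idx_dbl_iff in Hi as H. destruct H as (k & Hk & [->| ->]).
  - exists (2 * k). split. apply idx_dbl_iff; exists k; auto. hbs (2 * k); hbs (2 * k - 1).
    destruct Hk; split; lia.
  - exists (2 * k - 1). split. apply idx_dbl_iff; exists k; auto. hbs (2 * k); hbs (2 * k - 1).
    destruct Hk; split; lia.
Qed.

Lemma anti_of_chain (N : option nat) (x : nat -> G) :
  basic (seq_set (dbl N) x) ->
  (forall i j, idx (dbl N) i -> idx (dbl N) j ->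
     ac (x i) (x j) = (((i - 1) / 2 =? (j - 1) / 2) && negb (i =? j))) ->
  exists y, replacement (seq_set (dbl N) x) (seq_set (dbl N) y) /\ injon (dbl N) y /\
    (forall i j, idx (dbl N) i -> idx (dbl N) j -> i <> j -> ac (y i) (y j) = true).
Proof.
  intros Hb HF.
  assert (Hi : injon (dbl N) x).
  { intros i j Hii Hij He. destruct (Nat.eq_dec i j) as [|Hne]; auto. exfalso.
    destruct (@partner N i Hii) as (i' & Hi' & Hne' & Hh).
    assert (A1 := HF i i' Hii Hi'). assert (A2 := HF j i' Hij Hi').
    rewrite He in A1. rewrite A2 in A1.
    hbs i; hbs j; hbs i'.
    assert (1 <= i) by (apply (@idx_dbl_ge1 N i); auto).
    assert (1 <= j) by (apply (@idx_dbl_ge1 N j); auto).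
    assert (1 <= i') by (apply (@idx_dbl_ge1 N i'); auto).
    destruct (Nat.eqb_spec ((j - 1) / 2) ((i' - 1) / 2)), (Nat.eqb_spec j i'),
      (Nat.eqb_spec ((i - 1) / 2) ((i' - 1) / 2)), (Nat.eqb_spec i i'); simpl in A1; try discriminate; lia. }
  assert (HQ : forall m j, okm N (S m) -> idx (dbl N) j ->
    xorb (ac (x (2 * m + 1)) (x j)) (ac (x (2 * m + 2)) (x j)) = ((j =? 2 * m + 1) || (j =? 2 * m + 2))).
  { intros m j Hm Hj.
    assert (H1 := @idx_dbl1 N m Hm). assert (H2 := @idx_dbl2 N m Hm).
    rewrite !HF; auto. hbs j; hbs (2 * m + 1); hbs (2 * m + 2).
    assert (1 <= j) by (apply (@idx_dbl_ge1 N j); auto).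
    destruct (Nat.eqb_spec ((2 * m + 1 - 1) / 2) ((j - 1) / 2)),
      (Nat.eqb_spec ((2 * m + 2 - 1) / 2) ((j - 1) / 2)),
      (Nat.eqb_spec (2 * m + 1) j), (Nat.eqb_spec (2 * m + 2) j),
      (Nat.eqb_spec j (2 * m + 1)), (Nat.eqb_spec j (2 * m + 2)); simpl; try reflexivity; exfalso; lia. }
  destruct (@yT_repl N x Hb Hi) as [Hr Hinj].
  exists (yT x). split; [|split]; auto.
  intros i j Hii Hij Hne. rewrite (@yT_ac N x HQ i j), HF; auto.
  hbs i; hbs j. assert (1 <= i) by (apply (@idx_dbl_ge1 N i); auto).
  assert (1 <= j) by (apply (@idx_dbl_ge1 N j); auto).
  destruct (Nat.leb_spec j (2 * ((i - 1) / 2))), (Nat.leb_spec i (2 * ((j - 1) / 2))),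
    (Nat.eqb_spec ((i - 1) / 2) ((j - 1) / 2)), (Nat.eqb_spec i j); simpl;
    try reflexivity; exfalso; lia.
Qed.


Lemma halves k : 1 <= k -> (2 * k - 1 - 1) / 2 = k - 1 /\ (2 * k - 1) / 2 = k - 1.
Proof. intro. hbs (2 * k); hbs (2 * k - 1). split; lia. Qed.

Lemma enum_dbl (E : gset G) : (exists n, has_card E (2 * n)) \/ countably_infinite E ->
  exists N x, (forall g, E g <-> seq_set (dbl N) x g) /\ injon (dbl N) x.
Proof.
  intros [(n & s & Hn & Hl & Hs)|(f & Hf & Hs)].
  - exists (Some n), (fun k => nth (k - 1) s one). split.
    + intro g. rewrite Hs, In_nth_iff. unfold seq_set, idx, dbl. split.
      * intros (i & Hi & <-). exists (S i). replace (S i - 1) with i by lia. split; auto. lia.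
      * intros (k & Hk & <-). exists (k - 1). split; auto. lia.
    + intros i j Hi Hj He. unfold idx, dbl in Hi, Hj.
      assert (i - 1 = j - 1); [|lia]. apply (NoDup_nth s one); auto; lia.
  - exists None, (fun k => f (k - 1)). split.
    + intro g. rewrite Hs. unfold seq_set, idx, dbl. split.
      * intros (k & <-). exists (S k). replace (S k - 1) with k by lia. split; auto. split; auto; lia.
      * intros (k & Hk & <-). exists (k - 1). auto.
    + intros i j Hi Hj He. unfold idx, dbl in Hi, Hj. apply Hf in He. lia.
Qed.

Lemma card_dbl N (y : nat -> G) : injon (dbl N) y ->
  (exists n, has_card (seq_set (dbl N) y) (2 * n)) \/ countably_infinite (seq_set (dbl N) y).
Proof.
  intro Hi. destruct N as [n|].
  - left. exists n. exists (map y (seq 1 (2 * n))). split; [|split].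
    + apply nodup_map_inj with (N := dbl (Some n)); auto. apply seq_NoDup.
      intros k Hk. apply in_seq in Hk. unfold idx, dbl. lia.
    + rewrite length_map, length_seq; auto.
    + intro g. rewrite in_map_iff. unfold seq_set, idx, dbl. split.
      * intros (k & Hk & <-). exists k. split; auto. apply in_seq; lia.
      * intros (k & <- & Hk). apply in_seq in Hk. exists k. split; auto. lia.
  - right. exists (fun k => y (S k)). split.
    + intros i j He. apply Hi in He. lia. unfold idx, dbl; split; auto; lia. unfold idx, dbl; split; auto; lia.
    + intro g. unfold seq_set, idx, dbl. split.
      * intros (k & Hk & <-). exists (k - 1). f_equal. lia.
      * intros (k & <-). exists (S k). split; auto. split; auto; lia.
Qed.

Lemma P3a : forall E : gset G,
     generator E -> anticommutative E ->
     ((exists n, has_card E (2 * n)) \/ countably_infinite E) ->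
     exists E', replacement E E' /\ doubleton_chain E'.
Proof.
  intros E Hg Ha Hc. destruct (enum_dbl Hc) as (N & x & Hx & Hi).
  assert (Hb : basic (seq_set (dbl N) x)) by (apply basic_ext with (A := E); auto).
  assert (HA : forall i j, idx (dbl N) i -> idx (dbl N) j -> i <> j -> ac (x i) (x j) = true).
  { intros i j Hii Hij Hne. apply ac_anti. apply Ha. apply Hx; exists i; auto. apply Hx; exists j; auto.
    intro He. apply Hne. apply Hi; auto. }
  destruct (@chain_of_anti N x Hb Hi HA) as (y & Hr & Hiy & Hsame & Hdiff).
  exists (seq_set (dbl N) y). split.
  - apply repl_ext with (E2 := seq_set (dbl N) x) (F2 := seq_set (dbl N) y); auto. intro; tauto.
  - exists N, (fun k => y (2 * k - 1)), (fun k => y (2 * k)). split; [|split].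
    + intro g. unfold seq_set. split.
      * intros (i & Hii & <-). apply idx_dbl_iff in Hii. destruct Hii as (k & Hk & [->| ->]); exists k; auto.
      * intros (k & Hk & [->| ->]); [exists (2 * k - 1)|exists (2 * k)]; split; auto;
          apply idx_dbl_iff; exists k; auto.
    + intros k Hk. apply ac_anti. assert (1 <= k) by (destruct Hk; auto).
      destruct (halves H). apply Hsame; try (apply idx_dbl_iff; exists k; auto); lia.
    + intros i j Hii Hij Hne g h Hg0 Hh. apply ac_comm.
      assert (1 <= i) by (destruct Hii; auto). assert (1 <= j) by (destruct Hij; auto).
      destruct (halves H), (halves H0).
      destruct Hg0 as [->| ->], Hh as [->| ->]; apply Hdiff;
        try (apply idx_dbl_iff; exists i; split; [auto|lia]); try (apply idx_dbl_iff; exists j; split; [auto|lia]); lia.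
Qed.

Definition xab (a b : nat -> G) (i : nat) : G :=
  if Nat.even i then b (Nat.div2 i) else a (S (Nat.div2 i)).

Lemma xab_odd a b k : 1 <= k -> xab a b (2 * k - 1) = a k.
Proof.
  intro. unfold xab. replace (2 * k - 1) with (2 * (k - 1) + 1) by lia.
  rewrite Nat.even_odd, Nat.div2_odd'. f_equal; lia.
Qed.

Lemma xab_even a b k : xab a b (2 * k) = b k.
Proof. unfold xab. rewrite Nat.even_even, Nat.div2_double. auto. Qed.

Lemma P3b : forall E : gset G,
     generator E -> doubleton_chain E ->
     exists E', replacement E E' /\ anticommutative E' /\
       ((exists n, has_card E' (2 * n)) \/ countably_infinite E').
Proof.
  intros E Hg (N & a & b & Hiff & Hab & Hcom).
  set (x := xab a b).
  assert (Hx : forall g, E g <-> seq_set (dbl N) x g).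
  { intro g. rewrite Hiff. unfold seq_set. split.
    - intros (k & Hk & [->| ->]). assert (1 <= k) by (destruct Hk; auto).
      exists (2 * k - 1). split. apply idx_dbl_iff; exists k; auto. apply xab_odd; auto.
      exists (2 * k). split. apply idx_dbl_iff; exists k; auto. apply xab_even; auto.
    - intros (i & Hi & <-). apply idx_dbl_iff in Hi. destruct Hi as (k & Hk & [->| ->]);
      exists k; split; auto. left; apply xab_odd; destruct Hk; auto. right; apply xab_even. }
  assert (Hb : basic (seq_set (dbl N) x)) by (apply basic_ext with (A := E); auto).
  assert (HF : forall i j, idx (dbl N) i -> idx (dbl N) j ->
     ac (x i) (x j) = (((i - 1) / 2 =? (j - 1) / 2) && negb (i =? j))).
  { intros i j Hi Hj.
    apply idx_dbl_iff in Hi. destruct Hi as (k & Hk & Hik).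
    apply idx_dbl_iff in Hj. destruct Hj as (l & Hl & Hjl).
    assert (1 <= k) by (destruct Hk; auto). assert (1 <= l) by (destruct Hl; auto).
    destruct (halves H) as [Hk1 Hk2], (halves H0) as [Hl1 Hl2].
    assert (Hc : forall g h, k <> l -> (g = a k \/ g = b k) -> (h = a l \/ h = b l) -> ac g h = false).
    { intros g h Hne Hg2 Hh2. apply ac_comm. apply (Hcom k l); auto. }
    destruct Hik as [-> | ->], Hjl as [-> | ->]; unfold x; rewrite ?xab_odd, ?xab_even by auto;
      rewrite ?Hk1, ?Hk2, ?Hl1, ?Hl2;
      (destruct (Nat.eq_dec k l) as [<-|Hne];
       [ destruct (Nat.eqb_spec (k - 1) (k - 1)); [|lia]; rewrite ?andb_true_l;
         first [rewrite Nat.eqb_refl; apply ac_refl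
               | destruct (Nat.eqb_spec (2 * k - 1) (2 * k)); [lia|]; apply ac_anti, Hab; auto
               | destruct (Nat.eqb_spec (2 * k) (2 * k - 1)); [lia|]; rewrite ac_sym; apply ac_anti, Hab; auto]
       | rewrite Hc by auto; destruct (Nat.eqb_spec (k - 1) (l - 1)); [lia|]; reflexivity ]). }
  destruct (@anti_of_chain N x Hb HF) as (y & Hr & Hiy & Hay).
  exists (seq_set (dbl N) y). split; [|split].
  - apply repl_ext with (E2 := seq_set (dbl N) x) (F2 := seq_set (dbl N) y); auto. intro; tauto.
  - intros g h (i & Hi & <-) (j & Hj & <-) Hne. apply ac_anti, Hay; auto. all: try (intros ->; auto).
  - apply card_dbl; auto.
Qed.


Lemma single_comp (E : gset G) : (exists g, E g) -> anticommutative E ->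
  ((exists n, has_card E (2 * n)) \/ countably_infinite E) ->
  ac_component_partition E (Some 1) (fun _ => E).
Proof.
  intros Hne Ha Hc. unfold ac_component_partition, idx.
  split; [|split; [|split; [|split; [|split]]]].
  - intro g. split. intro H; exists 1; repeat split; auto. intros (i & _ & H); auto.
  - intros i j g Hi Hj _ _. lia.
  - intros; auto.
  - intros; auto.
  - intros; auto.
  - intros i j Hi Hj Hne2. lia.
Qed.

Lemma P4a : forall E : gset G,
     generator E -> anticommutative E ->
     ((exists n, has_card E (2 * n)) \/ countably_infinite E) ->
     exists E' J F, replacement E E' /\ ac_component_partition E' J F.
Proof.
  intros E Hg Ha Hc. exists E.
  assert (Hr : replacement E E) by (split; auto; intro; tauto).
  destruct Hc as [(n & s & Hn & Hl & Hs)|(f & Hf & Hs)].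
  - destruct n as [|n].
    + exists (Some 0), (fun _ _ => False). split; auto.
      unfold ac_component_partition, idx.
      split; [|split; [|split; [|split; [|split]]]]; try (intros; lia).
      intro g. rewrite Hs. destruct s; simpl in Hl; try lia. simpl. split; [intros []|intros (i & Hi & [])].
    + exists (Some 1), (fun _ => E). split; auto. apply single_comp; auto.
      destruct s as [|g s]; simpl in Hl; try lia. exists g. apply Hs; simpl; auto.
      left; exists (S n). exists s; auto.
  - exists (Some 1), (fun _ => E). split; auto. apply single_comp; auto.
    exists (f 0). apply Hs. exists 0; auto. right. exists f; auto.
Qed.

Lemma P4b : forall E : gset G,
     generator E -> anticommutative E -> countably_infinite E ->
     (exists E' n F, replacement E E' /\ ac_component_partition E' (Some n) F)
     /\
     (exists E' F, replacement E E' /\ ac_component_partition E' None F).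
Proof.
  intros E Hg Ha Hc. split.
  - exists E, 1, (fun _ => E). split. split; auto; intro; tauto.
    apply single_comp; auto. destruct Hc as (f & Hf & Hs). exists (f 0). apply Hs. exists 0; auto.
  - destruct Hc as (f & Hf & Hs).
    set (x := fun k => f (k - 1)).
    assert (Hx : forall g, E g <-> seq_set (dbl None) x g).
    { intro g. rewrite Hs. unfold seq_set, idx, dbl, x. split.
      * intros (k & <-). exists (S k). replace (S k - 1) with k by lia. split; auto. split; auto; lia.
      * intros (k & Hk & <-). exists (k - 1). auto. }
    assert (Hi : injon (dbl None) x).
    { intros i j Hi Hj He. unfold idx, dbl in Hi, Hj. apply Hf in He. lia. }
    assert (Hb : basic (seq_set (dbl None) x)) by (apply basic_ext with (A := E); auto).
    assert (HA : forall i j, idx (dbl None) i -> idx (dbl None) j -> i <> j -> ac (x i) (x j) = true).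
    { intros i j Hii Hij Hne. apply ac_anti. apply Ha. apply Hx; exists i; auto. apply Hx; exists j; auto.
      intro He. apply Hne. apply Hi; auto. }
    destruct (@chain_of_anti None x Hb Hi HA) as (y & Hr & Hiy & Hsame & Hdiff).
    exists (seq_set (dbl None) y), (fun k g => g = y (2 * k - 1) \/ g = y (2 * k)). split.
    + apply repl_ext with (E2 := seq_set (dbl None) x) (F2 := seq_set (dbl None) y); auto. intro; tauto.
    + assert (Hid : forall k, idx None k -> idx (dbl None) (2 * k - 1) /\ idx (dbl None) (2 * k)).
      { intros k Hk. split; apply idx_dbl_iff; exists k; split; auto; lia. }
      assert (Hk1 : forall k, idx None k -> 1 <= k) by (intros k [H _]; auto).
      unfold ac_component_partition.
      split; [|split; [|split; [|split; [|split]]]].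
      * intro g. unfold seq_set. split.
        -- intros (i & Hii & <-). apply idx_dbl_iff in Hii. destruct Hii as (k & Hk & [->| ->]); exists k; auto.
        -- intros (k & Hk & [->| ->]); [exists (2 * k - 1)|exists (2 * k)]; split; auto; apply Hid; auto.
      * intros i j g Hi2 Hj2 Hgi Hgj. pose proof (Hk1 i Hi2). pose proof (Hk1 j Hj2).
        destruct (Hid i Hi2), (Hid j Hj2).
        destruct Hgi as [->| ->], Hgj as [He|He]; apply Hiy in He; auto; lia.
      * intros i _. exists (y (2 * i - 1)); auto.
      * intros k Hk g h Hg2 Hh2 Hne. apply ac_anti. pose proof (Hk1 k Hk). destruct (Hid k Hk).
        destruct (halves H).
        destruct Hg2 as [->| ->], Hh2 as [->| ->]; try congruence; apply Hsame; auto; lia.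
      * intros k Hk. left. exists 1. pose proof (Hk1 k Hk). destruct (Hid k Hk).
        exists [y (2 * k - 1); y (2 * k)]. split; [|split].
        -- constructor. intros [He|[]]. apply Hiy in He; auto; lia. repeat constructor; auto.
        -- reflexivity.
        -- intro g. simpl. split. intros [->| ->]; auto. intros [<-|[<-|[]]]; auto.
      * intros i j Hi2 Hj2 Hne g h Hg2 Hh2. apply ac_comm.
        pose proof (Hk1 i Hi2). pose proof (Hk1 j Hj2). destruct (Hid i Hi2), (Hid j Hj2).
        destruct (halves H), (halves H0).
        destruct Hg2 as [->| ->], Hh2 as [->| ->]; apply Hdiff; auto; lia.
Qed.

End SG.

Theorem proposition5p2 : forall G : SignedGroup,
  (* (1) *)
  (forall (n : nat) (E : gset G),
     (n = 2 \/ n = 3) -> basic E -> has_card E n ->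
     (exists x y, E x /\ E y /\ anticommutes x y) ->
     exists E', replacement E E' /\ anticommutative E')
  /\
  (* (2) *)
  (forall (N : option nat) (u : nat -> G),
     basic_seq N u ->
     (forall k, idx N k -> idx N (S k) -> anticommutes (u k) (u (S k))) ->
     (forall i j, idx N i -> idx N j -> (i + 2 <= j \/ j + 2 <= i) ->
        commutes (u i) (u j)) ->
     let e := fun k => lprod (map u (seq 1 k)) in
     basic_seq N e /\
     (forall i j, idx N i -> idx N j -> i <> j -> anticommutes (e i) (e j)) /\
     (forall x, gen_group (seq_set N u) x <-> gen_group (seq_set N e) x) /\
     (forall k, idx N k ->
        u k = sg_mul (e (k - 1)) (e k) \/
        u k = sg_mul sg_neg1 (sg_mul (e (k - 1)) (e k))))
  /\
  (* (3) *)
  (forall E : gset G,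
     generator E -> anticommutative E ->
     ((exists n, has_card E (2 * n)) \/ countably_infinite E) ->
     exists E', replacement E E' /\ doubleton_chain E')
  /\
  (forall E : gset G,
     generator E -> doubleton_chain E ->
     exists E', replacement E E' /\ anticommutative E' /\
       ((exists n, has_card E' (2 * n)) \/ countably_infinite E'))
  /\
  (* (4) *)
  (forall E : gset G,
     generator E -> anticommutative E ->
     ((exists n, has_card E (2 * n)) \/ countably_infinite E) ->
     exists E' J F, replacement E E' /\ ac_component_partition E' J F)
  /\
  (forall E : gset G,
     generator E -> anticommutative E -> countably_infinite E ->
     (exists E' n F, replacement E E' /\ ac_component_partition E' (Some n) F)
     /\
     (exists E' F, replacement E E' /\ ac_component_partition E' None F))
  /\
  (* (5) *)
  (forall (K : list G) (M : gset G),
     let E := fun x => In x K \/ M x in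
     generator E -> NoDup K -> (forall x, In x K -> ~ M x) ->
     set_commute (fun x => In x K) M ->
     anticommutative (fun x => In x K) -> commutative M ->
     (Nat.Even (length K) -> (exists x, M x) ->
        exists (K' : list G) (M' : gset G),
          let E' := fun x => In x K' \/ M' x in
          replacement E E' /\ NoDup K' /\ (forall x, In x K' -> ~ M' x) /\
          set_commute (fun x => In x K') M' /\
          anticommutative (fun x => In x K') /\ commutative M' /\
          length K' = length K + 1 /\
          exists m0, M m0 /\ equinumerous M' (fun x => M x /\ x <> m0))
     /\
     (Nat.Odd (length K) ->
        exists (K' : list G) (M' : gset G),
          let E' := fun x => In x K' \/ M' x in
          replacement E E' /\ NoDup K' /\ (forall x, In x K' -> ~ M' x) /\
          set_commute (fun x => In x K') M' /\
          anticommutative (fun x => In x K') /\ commutative M' /\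
          length K' + 1 = length K /\
          exists m0, M' m0 /\ equinumerous M (fun x => M' x /\ x <> m0))).
Proof.
  intro G.
  split; [exact (@P1 G)|].
  split; [exact (@P2 G)|].
  split; [exact (@P3a G)|].
  split; [exact (@P3b G)|].
  split; [exact (@P4a G)|].
  split; [exact (@P4b G)|].
  exact (@P5 G).
Qed.
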